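(* Let $c$ be a cell of the basic hexagonal model and $\mathcal{N}_c$ its set of direct neighbours. If $N=\{n\in\mathcal{N}_c:\tau(n)<\tau(c)\}$, then $\tau_N(c)=\tau(c)$.
   Context: In the basic hexagonal model each cell $c$ has initial non-negative integer values $x(c,0)$ (resistance) and $y(c,0)$ (fuel); direct neighbours are cells sharing an edge. The ignition time $\tau(c)\in\mathbb{N}\cup\{\infty\}$ of $c$ is the moment $c$ ignites, and it satisfies $\tau(c)=\min\{t\in\mathbb{N}: x(c,0)\le\sum_{n\in\mathcal{N}_c}\max(0,\min(t-\tau(n),y(n,0)))\}$, where the minimum of the empty set is $\infty$ and $t-\infty=-\infty$. For a subset $N\subseteq\mathcal{N}_c$, the predicted ignition time is $\tau_N(c)=\min\{t\in\mathbb{N}: x(c,0)\le\sum_{n\in N}\max(0,\min(t-\tau(n),y(n,0)))\}$ (again $\infty$ if the set is empty), i.e. the time at which $c$ would ignite if the cells of $N$ were its only neighbours. *)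

(* Defs.v *)
From mathcomp Require Import all_boot all_order all_algebra.
Set Implicit Arguments. Unset Strict Implicit. Unset Printing Implicit Defensive.

(* Cells of the hexagonal grid in axial coordinates (q, r). *)
Definition cell := (int * int)%type.

Definition hex_nbrs (c : cell) : seq cell :=
  let: (q, r) := c in
  [:: ((q + 1)%R, r); ((q - 1)%R, r); (q, (r + 1)%R); (q, (r - 1)%R);
      ((q + 1)%R, (r - 1)%R); ((q - 1)%R, (r + 1)%R)].

(* Times in N ∪ {∞}: [Some t] is the finite time t, [None] is ∞. *)
Definition time := option nat.

Definition time_lt (a b : time) : bool :=
  match a, b with
  | Some m, Some n => m < n
  | Some _, None => true
  | None, _ => false
  end.

(* max(0, min(t - tau_n, y_n)), with t - ∞ = -∞ (so the term is 0).
   For a finite tau_n = s, max(0, min(t - s, y)) = min(t -_N s, y) since y >= 0,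
   where -_N is truncated subtraction. *)
Definition contrib (t : nat) (taun : time) (yn : nat) : nat :=
  match taun with
  | Some s => minn (t - s) yn
  | None => 0
  end.

(* [is_first P o] : o = min { t in N | P t }, with min of the empty set = ∞. *)
Definition is_first (P : nat -> Prop) (o : time) : Prop :=
  match o with
  | Some t => P t /\ (forall s, s < t -> ~ P s)
  | None => forall t, ~ P t
  end.

(* Predicted ignition time tau_N(c) for a subset N of the neighbours of c
   (N given as a predicate; only neighbours of c satisfying N are counted). *)
Definition pred_ignition (tau : cell -> time) (x y : cell -> nat)
    (c : cell) (N : pred cell) (o : time) : Prop :=
  is_first (fun t => x c <= \sum_(n <- hex_nbrs c | N n) contrib t (tau n) (y n)) o.

Definition ignition_times (tau : cell -> time) (x y : cell -> nat) : Prop :=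
  forall c, pred_ignition tau x y c predT (tau c).

(* Main.v *)
Require Import Defs.
From mathcomp Require Import all_boot all_order all_algebra.

Lemma sum_eq_aux (x y : cell -> nat) (tau : cell -> time) (c : cell) (P : pred cell) t :
  (forall n, ~~ P n -> contrib t (tau n) (y n) = 0) ->
  \sum_(n <- hex_nbrs c | P n) contrib t (tau n) (y n) =
  \sum_(n <- hex_nbrs c | predT n) contrib t (tau n) (y n).
Proof.
move=> H; rewrite big_mkcond /=; apply: eq_bigr => n _.
by case: (boolP (P n)) => // /H ->.
Qed.

Theorem lemma5 (x y : cell -> nat) (tau : cell -> time)
    (Htau : ignition_times tau x y) (c : cell) :
  pred_ignition tau x y c (fun n => time_lt (tau n) (tau c)) (tau c).
Proof.
have := Htau c; rewrite /pred_ignition /is_first.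
case Ec: (tau c) => [T|] /=.
- have Heq : forall t, t <= T ->
    \sum_(n <- hex_nbrs c | time_lt (tau n) (Some T)) contrib t (tau n) (y n) =
    \sum_(n <- hex_nbrs c | predT n) contrib t (tau n) (y n).
    move=> t ht; apply: (sum_eq_aux x) => n.
    rewrite /contrib; case: (tau n) => [s|] //=; move=> /negbTE Hs.
    have : T <= s by rewrite leqNgt Hs.
    move=> HTs; have -> : t - s = 0 by apply/eqP; rewrite subn_eq0 (leq_trans ht HTs).
    by rewrite min0n.
  move=> [H1 H2]; split; first by rewrite Heq.
  by move=> s hs; rewrite Heq ?(ltnW hs) //; apply: H2.
- move=> H t; rewrite (sum_eq_aux x); first by apply: H.
  by move=> n; rewrite /contrib; case: (tau n).
Qed.
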